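(* Let $\theta>0$, $n\ge2$, $j\in\{2,\ldots,n\}$. Then for $0\le r\le\lfloor n/j\rfloor$, $$\mathbb{P}(\tilde C_j(n)=r)=\Big(\frac{\theta}{j}\Big)^r\frac{1}{r!}\,\frac{n!}{\lambda_n(\theta)\,\theta_{(n)}}\sum_{i=r}^{\lfloor n/j\rfloor}\frac{(-1)^{i-r}}{(i-r)!}\,\frac{\lambda_{n-ji}(\theta)\,\theta_{(n-ji)}}{(n-ji)!}\Big(\frac{\theta}{j}\Big)^{i-r}.$$
   Context: Fix $\theta>0$. Write $\theta_{(0)}=1$ and $\theta_{(m)}=\theta(\theta+1)\cdots(\theta+m-1)$ for $m\ge1$. $\mathrm{ESF}(\theta)$ is the law of $(C_1(n),\ldots,C_n(n))$ with $\mathbb{P}(C_j(n)=c_j,\,1\le j\le n)=\frac{n!}{\theta_{(n)}}\prod_{j=1}^n(\theta/j)^{c_j}/c_j!$ whenever $\sum_j jc_j=n$. For $n\ge1$, $\lambda_n(\theta)=\mathbb{P}(C_1(n)=0)=\frac{n!}{\theta_{(n)}}\sum_{j=0}^n(-1)^j\frac{\theta^j}{j!}\frac{\theta_{(n-j)}}{(n-j)!}$, and $\lambda_0(\theta)=1$. The derangement cycle counts $(\tilde C_2(n),\ldots,\tilde C_n(n))$ have the law of $(C_2(n),\ldots,C_n(n))$ conditioned on $C_1(n)=0$. *)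

(* Defs.v *)
From mathcomp Require Import all_boot all_order all_algebra.
Set Implicit Arguments. Unset Strict Implicit. Unset Printing Implicit Defensive.
Import Order.TTheory GRing.Theory Num.Theory.
Local Open Scope ring_scope.

Definition rising {R : realFieldType} (theta : R) (m : nat) : R :=
  \prod_(i < m) (theta + i%:R).

(* A cycle-count vector for size n: c : {ffun 'I_n.+1 -> 'I_n.+1};
   c j (for 1 <= j <= n) is C_j(n).  The slot 0 is unused and forced to 0
   by the weight below.  Since sum_j j c_j = n, all c_j <= n, so every
   admissible vector is represented exactly once. *)
Definition cycvec (n : nat) := {ffun 'I_n.+1 -> 'I_n.+1}.

Definition esf_weight {R : realFieldType} (theta : R) (n : nat) (c : cycvec n) : R :=
  if (c ord0 == ord0) && ((\sum_(i < n.+1) (i * c i)%N)%N == n)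
  then (n`!)%:R / rising theta n *
       \prod_(i < n.+1 | (0 < i)%N) ((theta / i%:R) ^+ (c i) / ((c i)`!)%:R)
  else 0.

Definition esf_prob {R : realFieldType} (theta : R) (n : nat) (A : pred (cycvec n)) : R :=
  \sum_(c : cycvec n | A c) esf_weight theta c.

(* C_j(n) as a random variable (j interpreted in 1..n). *)
Definition Ccount (n : nat) (c : cycvec n) (j : nat) : nat := c (inord j).

(* P(Ctilde_j(n) = r) := P(C_j(n) = r | C_1(n) = 0). *)
Definition derangement_prob {R : realFieldType} (theta : R) (n j r : nat) : R :=
  esf_prob theta (fun c : cycvec n => (Ccount c j == r) && (Ccount c 1 == 0%N))
  / esf_prob theta (fun c : cycvec n => Ccount c 1 == 0%N).

Definition lambda {R : realFieldType} (theta : R) (n : nat) : R :=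
  if n is 0 then 1 else
  (n`!)%:R / rising theta n *
  \sum_(j < n.+1) ((-1) ^+ j * theta ^+ j / (j`!)%:R
                   * rising theta (n - j) / ((n - j)`!)%:R).

(* Main.v *)
Require Import Defs.
From mathcomp Require Import all_boot all_order all_algebra.
From mathcomp Require Import zify ring lra.
Import Order.TTheory GRing.Theory Num.Theory.
Local Open Scope ring_scope.

Definition fw {R : realFieldType} (theta : R) (k x : nat) : R :=
  (theta / k%:R) ^+ x / (x`!)%:R.
Definition Wt {R : realFieldType} (theta : R) {n : nat} (c : cycvec n) : R :=
  \prod_(i < n.+1 | (0 < i)%N) fw theta i (c i).
Definition sz {n : nat} (c : cycvec n) : nat := (\sum_(i < n.+1) (i * c i))%N.
Definition SS {R : realFieldType} (theta : R) {n : nat} (m : nat) (P : pred (cycvec n)) : R :=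
  \sum_(c : cycvec n | (c ord0 == ord0) && (sz c == m) && P c) Wt theta c.
Definition setv {n : nat} (c : cycvec n) (i v : 'I_n.+1) : cycvec n :=
  [ffun k => if k == i then v else c k].

Lemma fw0 (R : realFieldType) (theta : R) k : fw theta k 0 = 1.
Proof. by rewrite /fw expr0 fact0 divr1. Qed.

Lemma sz_setv n (c : cycvec n) i v : (sz (setv c i v) + i * c i = sz c + i * v)%N.
Proof.
rewrite /sz (bigD1 i) //= (bigD1 i (F := fun k : 'I_n.+1 => (k * c k)%N)) //=.
rewrite ffunE eqxx.
rewrite (eq_bigr (fun k : 'I_n.+1 => (k * c k)%N)); last first.
  by move=> k /negbTE Hk; rewrite ffunE Hk.
lia.
Qed.

Lemma Wt_setv (R : realFieldType) (theta : R) n (c : cycvec n) (i v : 'I_n.+1) :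
  (0 < i)%N -> Wt theta (setv c i v) * fw theta i (c i) = Wt theta c * fw theta i v.
Proof.
move=> Hi.
rewrite /Wt (bigD1 i) //= (bigD1 i (F := fun k : 'I_n.+1 => fw theta k (c k))) //=.
rewrite ffunE eqxx.
rewrite (eq_bigr (fun k : 'I_n.+1 => fw theta k (c k))); last first.
  by move=> k /andP [_ /negbTE Hk]; rewrite ffunE Hk.
ring.
Qed.

Lemma SS_ext (R : realFieldType) (theta : R) n m (P Q : pred (cycvec n)) :
  P =1 Q -> SS theta m P = SS theta m Q.
Proof. by move=> H; apply: eq_bigl => c; rewrite H. Qed.

Lemma sz_ge {n} (c : cycvec n) (i : 'I_n.+1) : (i * c i <= sz c)%N.
Proof. by rewrite /sz (bigD1 i) //= leq_addr. Qed.

Lemma setv_id n (c : cycvec n) i v w : setv (setv c i v) i w = setv c i w.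
Proof. by apply/ffunP => k; rewrite !ffunE; case: (k == i). Qed.

Lemma setv_eq n (c : cycvec n) i w : (setv c i w == c) = (c i == w).
Proof.
apply/eqP/eqP => [<-|H]; first by rewrite ffunE eqxx.
by apply/ffunP => k; rewrite !ffunE; case: eqP => // ->.
Qed.

Lemma SS_slot (R : realFieldType) (theta : R) n m (P : pred (cycvec n)) (i : 'I_n.+1) r :
  (0 < i)%N -> (forall c v, P (setv c i v) = P c) -> (r <= n)%N -> (i * r <= m)%N ->
  SS theta m (fun c => P c && (c i == r :> nat)) =
  fw theta i r * SS theta (m - i * r) (fun c => P c && (c i == 0%N :> nat)).
Proof.
move=> Hi HP Hr Hm.
have inr : (inord r : 'I_n.+1) = r :> nat by rewrite inordK.
rewrite /SS mulr_sumr.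
rewrite (reindex_onto (fun c => setv c i (inord r)) (fun c => setv c i ord0)); last first.
  move=> c /andP [_ /andP [_ /eqP Hc]].
  rewrite setv_id; apply/eqP; rewrite setv_eq; apply/eqP/val_inj; by rewrite /= inr Hc.
apply: eq_big => c.
  rewrite setv_id setv_eq HP.
  have E0 : (setv c i (inord r)) ord0 = c ord0.
    by rewrite ffunE; case: eqP => // E; move: Hi; rewrite -E.
  have E1 : (setv c i (inord r)) i = inord r by rewrite ffunE eqxx.
  have Esz := @sz_setv _ c i (inord r).
  rewrite E0 E1 inr.
  case: (boolP (c i == ord0)) => H0.
    have H0' : (c i = 0%N :> nat) by move/eqP: H0 => ->.
    rewrite H0' eqxx !andbT.
    rewrite H0' inr muln0 addn0 in Esz.
    congr (_ && _); congr (_ && _).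
    by rewrite Esz; apply/eqP/eqP; lia.
  have H0' : (c i == 0%N :> nat) = false.
    by apply/negbTE; apply: contra H0 => /eqP H; apply/eqP/val_inj.
  by rewrite H0' !andbF.
move=> /andP [_]; rewrite setv_id setv_eq => /eqP Hc.
have := @Wt_setv _ theta _ c i (inord r) Hi.
have -> : fw theta i (c i) = 1 by rewrite Hc fw0.
by rewrite mulr1 inr mulrC => ->.
Qed.

Lemma sum_tail (R : realFieldType) (g : nat -> R) a b : (a <= b)%N ->
  (forall k, (a <= k)%N -> (k < b)%N -> g k = 0) ->
  \sum_(0 <= k < b) g k = \sum_(0 <= k < a) g k.
Proof.
move=> Hab Hg; rewrite (@big_cat_nat _ _ _ a 0 b _ _ (leq0n a) Hab) /=.
rewrite -[RHS]addr0; congr (_ + _); rewrite big_nat_cond; apply: big1 => k /andP [/andP [H1 H2] _].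
exact: Hg.
Qed.

Lemma SS_part_h (R : realFieldType) (theta : R) n m (P : pred (cycvec n)) (i : 'I_n.+1)
   (h : nat -> R) : (0 < i)%N -> (m <= n)%N ->
  \sum_(c : cycvec n | (c ord0 == ord0) && (sz c == m) && P c) h (c i) * Wt theta c =
  \sum_(0 <= r < (m %/ i).+1) h r * SS theta m (fun c => P c && (c i == r :> nat)).
Proof.
move=> Hi Hm.
rewrite (partition_big (fun c : cycvec n => c i) predT) //=.
rewrite (eq_bigr (fun r : 'I_n.+1 => h r * SS theta m (fun c => P c && (c i == r :> nat)))); last first.
  move=> r _; rewrite /SS mulr_sumr; apply: eq_big => c; first by rewrite !andbA.
  by move=> /andP [_ /eqP ->].
rewrite -(big_mkord xpredT (fun r => h r * SS theta m (fun c => P c && (c i == r :> nat)))).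
apply: sum_tail.
  by rewrite ltnS; apply: leq_trans (leq_div _ _) Hm.
move=> k Hk _.
rewrite /SS big1 ?mulr0 // => c /andP [/andP [_ /eqP Hs] /andP [_ /eqP Hc]].
exfalso.
have := sz_ge c i; rewrite Hs Hc => H.
move: Hk; rewrite ltnNge leq_divRL // mulnC H //.
Qed.

Lemma SS_decomp (R : realFieldType) (theta : R) n m (P : pred (cycvec n)) (i : 'I_n.+1) :
  (0 < i)%N -> (forall c v, P (setv c i v) = P c) -> (m <= n)%N ->
  SS theta m P = \sum_(0 <= r < (m %/ i).+1)
     fw theta i r * SS theta (m - i * r) (fun c => P c && (c i == 0%N :> nat)).
Proof.
move=> Hi HP Hm.
have -> : SS theta m P = \sum_(c : cycvec n | (c ord0 == ord0) && (sz c == m) && P c)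
     (fun _ => 1) (c i) * Wt theta c.
  by apply: eq_bigr => c _; rewrite mul1r.
rewrite (@SS_part_h _ theta _ m P i (fun _ => 1) Hi Hm); apply: eq_big_nat => r /andP [_ Hr].
rewrite mul1r SS_slot //.
  apply: leq_trans Hm; apply: leq_trans (leq_div m i); by rewrite -ltnS.
by rewrite mulnC -leq_divRL // -ltnS.
Qed.

Lemma tri_sum (R : realFieldType) (F : nat -> nat -> R) M :
  \sum_(0 <= k < M.+1) \sum_(0 <= r < (M - k)%N.+1) F k r =
  \sum_(0 <= s < M.+1) \sum_(0 <= k < s.+1) F k (s - k)%N.
Proof.
elim: M => [|M IH]; first by rewrite !big_nat1.
rewrite big_nat_recr //= [RHS]big_nat_recr //= subnn big_nat1.
rewrite [X in _ = _ + X]big_nat_recr //= subnn.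
rewrite (eq_big_nat _ _ (F2 := fun k => \sum_(0 <= r < (M - k)%N.+1) F k r + F k (M.+1 - k)%N)); last first.
  move=> k /andP [_ Hk]; rewrite subSn // big_nat_recr //= -subSn //.
rewrite big_split /= IH addrA.
by [].
Qed.

Lemma fact_neq0 (R : realFieldType) k : (k`!)%:R != 0 :> R.
Proof. by rewrite pnatr_eq0 -lt0n fact_gt0. Qed.

Lemma fw_conv (R : realFieldType) (theta : R) k s :
  \sum_(0 <= a < s.+1) (-1) ^+ a * fw theta k a * fw theta k (s - a)%N = (s == 0)%:R.
Proof.
set t := theta / k%:R.
rewrite (eq_big_nat _ _ (F2 := fun a => (t ^+ s / (s`!)%:R) * ((-1) ^+ a *+ 'C(s, a)))); last first.
  move=> a /andP [_ Ha]; rewrite ltnS in Ha.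
  have Hf := bin_fact Ha.
  have Hf' : (s`!)%:R = ('C(s, a))%:R * (a`!)%:R * ((s - a)`!)%:R :> R.
    by rewrite -Hf !natrM mulrA.
  rewrite /fw -/t -mulr_natr Hf'.
  have -> : t ^+ s = t ^+ a * t ^+ (s - a) by rewrite -exprD subnKC.
  have h1 := fact_neq0 R a; have h2 := fact_neq0 R (s - a).
  have h3 : ('C(s, a))%:R != 0 :> R by rewrite pnatr_eq0 -lt0n bin_gt0.
  field; rewrite h1 h2 h3 //.
rewrite -mulr_sumr big_mkord.
have -> : \sum_(i < s.+1) (-1) ^+ i *+ 'C(s, i) = (1 + (-1)) ^+ s :> R.
  by rewrite exprDn; apply: eq_bigr => i _; rewrite expr1n mul1r.
rewrite addrN expr0n; case: s => [|s] /=; last by rewrite mulr0.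
by rewrite expr0 fact0 divr1 mulr1.
Qed.

Lemma SS_incl_excl (R : realFieldType) (theta : R) n m (P : pred (cycvec n)) (i : 'I_n.+1) :
  (0 < i)%N -> (forall c v, P (setv c i v) = P c) -> (m <= n)%N ->
  SS theta m (fun c => P c && (c i == 0%N :> nat)) =
  \sum_(0 <= k < (m %/ i).+1) (-1) ^+ k * fw theta i k * SS theta (m - i * k) P.
Proof.
move=> Hi HP Hm.
set P0 := (fun c => P c && (c i == 0%N :> nat)).
set F := fun k r => (-1) ^+ k * fw theta i k * fw theta i r * SS theta (m - i * (k + r))%N P0.
rewrite (eq_big_nat _ _ (F2 := fun k => \sum_(0 <= r < (m %/ i - k)%N.+1) F k r)); last first.
  move=> k /andP [_ Hk].
  rewrite (@SS_decomp _ theta n (m - i * k) P i Hi HP); last by apply: leq_trans (leq_subr _ _) Hm.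
  rewrite mulr_sumr (mulnC i k) divnBMl.
  apply: eq_big_nat => r _; rewrite /F mulrA; congr (_ * SS theta _ _).
  by rewrite mulnDr subnDA (mulnC i k).
rewrite tri_sum.
rewrite (eq_big_nat _ _ (F2 := fun s => (s == 0%N)%:R * SS theta (m - i * s)%N P0)); last first.
  move=> s /andP [_ Hs].
  rewrite -(@fw_conv _ theta i s) mulr_suml; apply: eq_big_nat => a /andP [_ Ha].
  by rewrite /F subnKC // -ltnS.
rewrite big_nat_recl // muln0 subn0 /= mul1r big_nat_cond big1 ?addr0 // => s _.
by rewrite mul0r.
Qed.

Lemma fw_shift (R : realFieldType) (theta : R) (i : nat) r : (0 < i)%N ->
  (r.+1)%:R * fw theta i r.+1 = theta / i%:R * fw theta i r.
Proof.
move=> Hi; rewrite /fw factS natrM exprS.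
have h1 := fact_neq0 R r.
have h2 : (r.+1)%:R != 0 :> R by rewrite pnatr_eq0.
field; by rewrite h1 addrC natr1 h2 pnatr_eq0 -lt0n Hi.
Qed.

Lemma inner_sum (R : realFieldType) (theta : R) n m (i : 'I_n.+1) : (m <= n)%N ->
  \sum_(c : cycvec n | (c ord0 == ord0) && (sz c == m) && xpredT c) ((i * c i)%:R * Wt theta c)
  = if (0 < i)%N && (i <= m)%N then theta * SS theta (m - i) (xpredT : pred (cycvec n)) else 0.
Proof.
move=> Hm.
case: (posnP i) => [Hi0|Hi] /=.
  by rewrite big1 // => c _; rewrite Hi0 mul0n mul0r.
rewrite (eq_bigr (fun c : cycvec n => i%:R * ((fun r => r%:R) (c i) * Wt theta c))); last first.
  by move=> c _; rewrite natrM mulrA.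
rewrite -mulr_sumr (@SS_part_h _ theta _ m xpredT i (fun r => r%:R) Hi Hm).
rewrite (eq_big_nat _ _ (F2 := fun r => r%:R * fw theta i r *
             SS theta (m - i * r) (fun c => xpredT c && (c i == 0%N :> nat)))); last first.
  move=> r /andP [_ Hr]; rewrite ltnS in Hr.
  rewrite SS_slot // ?mulrA //.
    apply: leq_trans Hm; by apply: leq_trans (leq_div m i).
  by rewrite mulnC -leq_divRL.
case: leqP => Him.
  have HM : (0 < m %/ i)%N by rewrite divn_gt0.
  rewrite -(prednK HM) big_nat_recl // !mul0r add0r.
  rewrite (eq_big_nat _ _ (F2 := fun r => theta / i%:R * (fw theta i r *
             SS theta ((m - i) - i * r) (fun c => xpredT c && (c i == 0%N :> nat))))); last first.
    move=> r _; rewrite fw_shift // -mulrA; congr (_ * (_ * SS theta _ _)).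
    by rewrite mulnS subnDA.
  rewrite -mulr_sumr.
  have -> : ((m %/ i).-1 = (m - i) %/ i)%N by rewrite -{2}(mul1n i) divnBMl subn1.
  rewrite -(@SS_decomp _ theta n (m - i) xpredT i Hi) //; last by apply: leq_trans (leq_subr _ _) Hm.
  have Hi' : (i%:R : R) != 0 by rewrite pnatr_eq0 -lt0n.
  by rewrite mulrA mulrCA divff // mulr1.
have -> : (m %/ i = 0)%N by rewrite divn_small.
by rewrite big_nat1 mul0r mul0r mulr0.
Qed.

Lemma T_rec (R : realFieldType) (theta : R) n m : (m <= n)%N ->
  m%:R * SS theta m (xpredT : pred (cycvec n)) =
  theta * \sum_(0 <= k < m) SS theta k (xpredT : pred (cycvec n)).
Proof.
move=> Hm.
have -> : m%:R * SS theta m (xpredT : pred (cycvec n)) =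
   \sum_(c : cycvec n | (c ord0 == ord0) && (sz c == m) && xpredT c)
      \sum_(i < n.+1) ((i * c i)%:R * Wt theta c).
  rewrite /SS mulr_sumr; apply: eq_bigr => c /andP [/andP [_ /eqP <-] _].
  by rewrite /sz natr_sum mulr_suml.
rewrite exchange_big /=.
rewrite (eq_bigr (fun i : 'I_n.+1 => if (0 < i)%N && (i <= m)%N then
       theta * SS theta (m - i) (xpredT : pred (cycvec n)) else 0)); last first.
  by move=> i _; rewrite inner_sum.
rewrite -(big_mkord xpredT (fun i => if (0 < i)%N && (i <= m)%N then
       theta * SS theta (m - i) (xpredT : pred (cycvec n)) else 0)).
rewrite (@sum_tail _ _ m.+1); last first.
- by move=> k Hk _; rewrite (leqNgt k m) Hk andbF.
- by [].
rewrite big_nat_recl //= add0r mulr_sumr.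
rewrite big_nat_rev /=; apply: eq_big_nat => k /andP [_ Hk].
rewrite add0n.
have -> : (m - k.+1 < m)%N by lia.
by have -> : (m - (m - k.+1).+1 = k)%N by lia.
Qed.

Lemma T0 (R : realFieldType) (theta : R) n : SS theta 0 (xpredT : pred (cycvec n)) = 1.
Proof.
rewrite /SS (big_pred1 [ffun => ord0]); last first.
  move=> c /=; rewrite andbT; apply/andP/eqP.
    move=> [/eqP H0 /eqP Hs]; apply/ffunP => k; rewrite ffunE.
    case: (posnP k) => Hk.
      by have -> : k = ord0 by apply: val_inj.
    have := sz_ge c k; rewrite Hs leqn0 muln_eq0 => /orP [/eqP E|/eqP E].
      by move: Hk; rewrite E.
    by apply: val_inj.
  move=> ->; rewrite ffunE eqxx; split => //; apply/eqP.
  by rewrite /sz big1 // => k _; rewrite ffunE muln0.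
by rewrite /Wt big1 // => k _; rewrite ffunE fw0.
Qed.

Lemma rising_gt0 (R : realFieldType) (theta : R) m : 0 < theta -> 0 < rising theta m.
Proof.
move=> Ht; rewrite /rising; apply: prodr_gt0 => i _.
by apply: (lt_le_trans Ht); rewrite lerDl ler0n.
Qed.

Lemma risingS (R : realFieldType) (theta : R) m : rising theta m.+1 = rising theta m * (theta + m%:R).
Proof. by rewrite /rising big_ord_recr. Qed.

Lemma u_rec (R : realFieldType) (theta : R) m :
  m%:R * (rising theta m / (m`!)%:R) =
  theta * \sum_(0 <= k < m) (rising theta k / (k`!)%:R).
Proof.
elim: m => [|m IH]; first by rewrite big_geq // mul0r mulr0.
rewrite big_nat_recr //= mulrDr -IH risingS factS natrM.
have h1 := fact_neq0 R m.
have h2 : (m.+1)%:R != 0 :> R by rewrite pnatr_eq0.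
rewrite -natr1 in h2 *.
field; by rewrite h1 h2.
Qed.

Lemma T_eq (R : realFieldType) (theta : R) n m : (m <= n)%N ->
  SS theta m (xpredT : pred (cycvec n)) = rising theta m / (m`!)%:R.
Proof.
elim/ltn_ind: m => m IH Hm.
case: (posnP m) => [->|Hm0].
  by rewrite T0 /rising big_ord0 fact0 divr1.
have Hm' : (m%:R : R) != 0 by rewrite pnatr_eq0 -lt0n.
apply: (mulfI Hm'); rewrite T_rec // u_rec; congr (_ * _).
apply: eq_big_nat => k /andP [_ Hk]; apply: IH => //.
exact: leq_trans (ltnW Hk) Hm.
Qed.

Lemma A_eq (R : realFieldType) (theta : R) n m (one : 'I_n.+1) : 0 < theta -> one = 1%N :> nat ->
  (m <= n)%N ->
  SS theta m (fun c : cycvec n => c one == 0%N :> nat) =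
  lambda theta m * rising theta m / (m`!)%:R.
Proof.
move=> Ht H1 Hm.
have Hone : (0 < one)%N by rewrite H1.
rewrite (@SS_ext _ theta n m _ (fun c => xpredT c && (c one == 0%N :> nat))) //.
rewrite SS_incl_excl //.
move: Hone; case: one H1 => o Ho /= H1 _; subst o; rewrite divn1.
rewrite (eq_big_nat _ _ (F2 := fun k => (-1) ^+ k * theta ^+ k / (k`!)%:R
                   * rising theta (m - k) / ((m - k)`!)%:R)); last first.
  move=> k /andP [_ Hk]; rewrite mul1n T_eq; last by apply: leq_trans (leq_subr _ _) Hm.
  by rewrite /fw divr1 !mulrA.
rewrite big_mkord.
case: m Hm => [|m] Hm.
  rewrite big_ord1 /= /rising !big_ord0 fact0 !divr1 expr0 !mulr1.
  by [].
rewrite /lambda.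
have h1 := fact_neq0 R m.+1.
have h2 : rising theta m.+1 != 0.
  by rewrite lt0r_neq0 // rising_gt0.
by field; rewrite h1 h2.
Qed.

Lemma esf_SS (R : realFieldType) (theta : R) n (A : pred (cycvec n)) :
  esf_prob theta A = (n`!)%:R / rising theta n * SS theta n A.
Proof.
rewrite /esf_prob /SS mulr_sumr big_mkcond [RHS]big_mkcond.
apply: eq_bigr => c _; rewrite /esf_weight -/(sz c).
by case: (A c); case: ((c ord0 == ord0) && (sz c == n)); rewrite ?andbT ?andbF // /Wt /fw.

Qed.

Lemma sum_shift (R : realFieldType) (G : nat -> R) r b :
  \sum_(r <= i < b) G i = \sum_(0 <= k < b - r) G (k + r)%N.
Proof. by rewrite -{1}(add0n r) big_addn. Qed.

Theorem mainTheorem10 (R : realFieldType) (theta : R) (n j r : nat) :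
  0 < theta -> (2 <= n)%N -> (2 <= j)%N -> (j <= n)%N -> (r <= n %/ j)%N ->
  derangement_prob theta n j r =
    (theta / j%:R) ^+ r / (r`!)%:R * ((n`!)%:R / (lambda theta n * rising theta n)) *
    \sum_(r <= i < (n %/ j).+1)
       ((-1) ^+ (i - r) / ((i - r)`!)%:R *
        (lambda theta (n - j * i) * rising theta (n - j * i) / ((n - j * i)`!)%:R) *
        (theta / j%:R) ^+ (i - r)).
Proof.
move=> Ht Hn Hj Hjn Hr.
pose o1 := (inord 1 : 'I_n.+1).
pose jj := (inord j : 'I_n.+1).
have Ho1 : o1 = 1%N :> nat by rewrite /o1 inordK //; lia.
have Hjj : jj = j :> nat by rewrite /jj inordK //; lia.
have Hjj0 : (0 < jj)%N by rewrite Hjj; lia.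
have Hne : jj != o1 by apply/eqP => E; move: (congr1 val E); rewrite /= Hjj Ho1; lia.
pose P1 := fun c : cycvec n => c o1 == 0%N :> nat.
have HP1 : forall c v, P1 (setv c jj v) = P1 c.
  by move=> c v; rewrite /P1 ffunE (negbTE (_ : o1 != jj)) // eq_sym.
rewrite /derangement_prob !esf_SS.
have -> : SS theta n (fun c : cycvec n => Ccount c 1 == 0%N) = SS theta n P1 by [].
rewrite (@SS_ext _ theta n n _ (fun c => P1 c && (c jj == r :> nat))); last first.
  by move=> c; rewrite /P1 /Ccount andbC.
have Hrn : (r <= n)%N by apply: leq_trans Hr (leq_div _ _).
have Hjr : (jj * r <= n)%N by rewrite Hjj mulnC -leq_divRL //; lia.
rewrite SS_slot // SS_incl_excl //; last by apply: leq_subr.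
rewrite A_eq //.
rewrite Hjj.
have Hdiv : ((n - j * r) %/ j = n %/ j - r)%N by rewrite mulnC divnBMl.
rewrite Hdiv (@sum_shift _ _ r) subSn //.
have HK : (n`!)%:R / rising theta n != 0.
  by rewrite mulf_neq0 ?invr_eq0 ?fact_neq0 // lt0r_neq0 // rising_gt0.
rewrite invfM mulrACA divff // mul1r invf_div.
have -> : \sum_(0 <= k < (n %/ j - r).+1)
      (-1) ^+ k * fw theta j k * SS theta (n - j * r - j * k) P1 =
   \sum_(0 <= k < (n %/ j - r).+1)
     ((-1) ^+ (k + r - r) / ((k + r - r)`!)%:R *
     (lambda theta (n - j * (k + r)) * rising theta (n - j * (k + r)) / ((n - j * (k + r))`!)%:R) *
     (theta / j%:R) ^+ (k + r - r)).
  apply: eq_big_nat => k _.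
  rewrite A_eq //; last by apply: leq_trans (leq_subr _ _) (leq_subr _ _).
  rewrite addnK mulnDr addnC subnDA /fw.
  ring.
rewrite /fw; by rewrite mulrAC.
Qed.
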